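(* Let $K$ be a matrix convex set in $h$ self-adjoint variables that equals the matrix convex hull of its free extreme points, let $g<h$, and let $X\in\mathcal P_gK(n)$ be a free extreme point of $\mathcal P_gK$. Then either there is $Y$ with $(X,Y)$ a free extreme point of $K$, or there exist $Z\in\mathcal P_gK$ and $Y$ such that $(X\oplus Z,Y)$ is a free extreme point of $K$.
   Context: A matrix convex set $K$ is a graded set of self-adjoint tuples closed under matrix convex combinations $\sum_iV_i^*X^{(i)}V_i$ with $\sum_iV_i^*V_i=I$; $\mathrm{mconv}(S)$ is the smallest matrix convex set containing $S$ (no closure). A point $X\in K(n)$ is a free extreme point of $K$ if whenever $X=\sum_iV_i^*X^{(i)}V_i$ is a matrix convex combination of points of $K$ with all $V_i\ne0$, each $X^{(i)}$ is unitarily equivalent to $X$ or to $X\oplus Z$ for some $Z\in K$; equivalently $X$ is irreducible and has only trivial dilations in $K$. $\mathcal P_gK$ is the set of $X$ with $(X,Y)\in K$ for some $Y$ of the same size. *)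

(* Defs.v *)
From mathcomp Require Import all_boot all_algebra.
From mathcomp Require Import reals complex.
Set Implicit Arguments. Unset Strict Implicit. Unset Printing Implicit Defensive.
Import GRing.Theory Num.Theory.
Local Open Scope ring_scope.

Section MatrixConvex.
Variable C : numClosedFieldType.

Definition adj m n (A : 'M[C]_(m, n)) : 'M[C]_(n, m) := (map_mx Num.conj A)^T.

Definition mtuple (h n : nat) := 'I_h -> 'M[C]_n.

Definition selfadj h n (X : mtuple h n) : Prop := forall j, adj (X j) = X j.

(* graded set: a set of h-tuples at every level n (only levels n >= 1 matter) *)
Definition gset (h : nat) := forall n : nat, mtuple h n -> Prop.

Definition mcomb h n k (m : 'I_k -> nat) (Xs : forall i, mtuple h (m i))
  (V : forall i, 'M[C]_(m i, n)) : mtuple h n :=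
  fun j => \sum_(i < k) (adj (V i) *m Xs i j *m V i).

Definition isometric_family n k (m : 'I_k -> nat) (V : forall i, 'M[C]_(m i, n)) : Prop :=
  \sum_(i < k) (adj (V i) *m V i) = 1%:M.

Definition matrix_convex h (K : gset h) : Prop :=
  (forall n (X : mtuple h n), (0 < n)%N -> K n X -> selfadj X) /\
  (forall n k (m : 'I_k -> nat) (Xs : forall i, mtuple h (m i))
          (V : forall i, 'M[C]_(m i, n)),
     (0 < n)%N -> (forall i, 0 < m i)%N -> (forall i, K (m i) (Xs i)) ->
     isometric_family V -> K n (mcomb Xs V)).

(* smallest matrix convex set containing S (no closure) *)
Definition mconv h (S : gset h) : gset h :=
  fun n X => forall K : gset h, matrix_convex K ->
    (forall p (Y : mtuple h p), (0 < p)%N -> S p Y -> K p Y) -> K n X.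

Definition dsum h n p (X : mtuple h n) (Z : mtuple h p) : mtuple h (n + p) :=
  fun j => block_mx (X j) 0 0 (Z j).

(* unitary equivalence (forces equal sizes) *)
Definition unieq h m n (A : mtuple h m) (B : mtuple h n) : Prop :=
  exists U : 'M[C]_(m, n),
    adj U *m U = 1%:M /\ U *m adj U = 1%:M /\ forall j, A j = U *m B j *m adj U.

Definition free_extreme h (K : gset h) n (X : mtuple h n) : Prop :=
  (0 < n)%N /\ K n X /\
  forall k (m : 'I_k -> nat) (Xs : forall i, mtuple h (m i))
         (V : forall i, 'M[C]_(m i, n)),
    (forall i, 0 < m i)%N -> (forall i, K (m i) (Xs i)) ->
    (forall i, V i != 0) -> isometric_family V -> X = mcomb Xs V ->
    forall i, unieq (Xs i) X \/
      exists p (Z : mtuple h p), (0 < p)%N /\ K p Z /\ unieq (Xs i) (dsum X Z).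

Definition free_ext_set h (K : gset h) : gset h := fun n X => free_extreme K X.

(* the pair (X, Y): first g coordinates X, remaining h - g coordinates Y *)
Definition pairT g h n (X : mtuple g n) (Y : mtuple (h - g) n) : mtuple h n :=
  fun j => match (insub (nat_of_ord j) : option 'I_g) with
           | Some a => X a
           | None => match (insub (nat_of_ord j - g)%N : option 'I_(h - g)) with
                     | Some b => Y b
                     | None => 0
                     end
           end.

Definition proj g h (K : gset h) : gset g :=
  fun n X => exists Y : mtuple (h - g) n, K n (pairT X Y).

End MatrixConvex.

Arguments mconv {C h} S n X.
Arguments free_ext_set {C h} K n X.
Arguments proj {C} g {h} K n X.
Arguments free_extreme {C h} K {n} X.

(* Main.v *)
Require Import Defs.
From mathcomp Require Import all_boot all_algebra.
From mathcomp Require Import reals complex.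
From mathcomp Require Import zify.
From Stdlib Require Import Classical FunctionalExtensionality.
Set Implicit Arguments. Unset Strict Implicit. Unset Printing Implicit Defensive.
Import GRing.Theory Num.Theory.
Local Open Scope ring_scope.

Section Gen.
Variable C : numClosedFieldType.

Lemma adjM m n p (A : 'M[C]_(m,n)) (B : 'M[C]_(n,p)) : adj (A *m B) = adj B *m adj A.
Proof. by rewrite /adj map_mxM trmx_mul. Qed.
Lemma adjK m n (A : 'M[C]_(m,n)) : adj (adj A) = A.
Proof. apply/matrixP=> i j; rewrite /adj !mxE; exact: conjCK. Qed.
Lemma adj0 m n : adj (0 : 'M[C]_(m,n)) = 0.
Proof. apply/matrixP=> i j; rewrite /adj !mxE; exact: rmorph0. Qed.
Lemma adj1 n : adj (1%:M : 'M[C]_n) = 1%:M.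
Proof. by apply/matrixP=> i j; rewrite /adj !mxE conjC_nat eq_sym. Qed.
Lemma adj_block m1 m2 n1 n2 (A : 'M[C]_(m1,n1)) (B : 'M[C]_(m1,n2)) (D : 'M[C]_(m2,n1)) (E : 'M[C]_(m2,n2)) :
  adj (block_mx A B D E) = block_mx (adj A) (adj D) (adj B) (adj E).
Proof. by rewrite /adj map_block_mx tr_block_mx. Qed.
Lemma adj_col m1 m2 n (A : 'M[C]_(m1,n)) (B : 'M[C]_(m2,n)) :
  adj (col_mx A B) = row_mx (adj A) (adj B).
Proof. by rewrite /adj map_col_mx tr_col_mx. Qed.

Lemma zero_ne1 n : (0 < n)%N -> (0 : 'M[C]_n) != 1%:M.
Proof.
case: n => // n _; apply/eqP => /matrixP /(_ ord0 ord0); rewrite !mxE eqxx /=.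
by move/eqP; rewrite eq_sym oner_eq0.
Qed.

Lemma unieq_trans h m n q (A : mtuple C h m) (B : mtuple C h n) (D : mtuple C h q) :
  unieq A B -> unieq B D -> unieq A D.
Proof.
case=> U [U1 [U2 U3]] [W [W1 [W2 W3]]]; exists (U *m W); rewrite adjM; split; last split.
- by rewrite -mulmxA (mulmxA (adj U)) U1 mul1mx W1.
- by rewrite -mulmxA (mulmxA W) W2 mul1mx U2.
- by move=> j; rewrite U3 W3 !mulmxA.
Qed.

Lemma unieq_dsum h m n p (E : mtuple C h m) (F : mtuple C h n) (Z : mtuple C h p) :
  unieq E F -> unieq (dsum E Z) (dsum F Z).
Proof.
case=> U [H1 [H2 H3]]; exists (block_mx U 0 0 1%:M).
rewrite adj_block !adj0 adj1.
rewrite !mulmx_block !(mul0mx, mulmx0, addr0, add0r, mul1mx, mulmx1) H1 H2 -!scalar_mx_block.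
split => //; split => // j.
by rewrite /dsum !mulmx_block !(mul0mx, mulmx0, addr0, add0r, mul1mx, mulmx1) H3.
Qed.

Definition compr g n m (X : mtuple C g n) (A : mtuple C g m) :=
  exists V : 'M[C]_(m, n), adj V *m V = 1%:M /\ forall a, X a = adj V *m A a *m V.

Lemma compr_unieq g n m (X : mtuple C g n) (A : mtuple C g m) : unieq A X -> compr X A.
Proof.
case=> W [W1 [W2 W3]]; exists W; split => // a.
by rewrite W3 !mulmxA W1 mul1mx -mulmxA W1 mulmx1.
Qed.

Lemma compr_unieq_dsum g n m p (X : mtuple C g n) (Z : mtuple C g p) (A : mtuple C g m) :
  unieq A (dsum X Z) -> compr X A.
Proof.
case=> W [W1 [W2 W3]]; exists (W *m col_mx 1%:M 0).
rewrite adjM adj_col adj1 adj0; split.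
  by rewrite -mulmxA (mulmxA (adj W)) W1 mul1mx mul_row_col mul1mx mul0mx addr0.
move=> a; rewrite W3 /dsum.
rewrite -!mulmxA (mulmxA (adj W)) W1 mul1mx !mulmxA -(mulmxA _ (adj W)) W1 mulmx1.
by rewrite mul_row_block !(mul0mx, mulmx0, addr0, add0r, mul1mx, mulmx1) mul_row_col mulmx1 mulmx0 addr0.
Qed.


Lemma conj_free h (K : gset C h) (HK : matrix_convex K) m q (E : mtuple C h m)
  (U : 'M[C]_(m, q)) :
  free_extreme K E -> adj U *m U = 1%:M -> U *m adj U = 1%:M -> (0 < q)%N ->
  free_extreme K (fun j => adj U *m E j *m U).
Proof.
move=> [m0 [KE HE]] HU1 HU2 q0; split => //; split.
  have -> : (fun j => adj U *m E j *m U) =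
            mcomb (k:=1) (m:=fun _ => m) (fun _ => E) (fun _ => U).
    by apply: functional_extensionality => j; rewrite /mcomb big_ord1.
  by apply: HK.2 => //; rewrite /isometric_family big_ord1.
move=> k mm Xs V mpos HXs V0 HV HF i.
have HE' : E = mcomb Xs (fun i => V i *m adj U).
  apply: functional_extensionality => j.
  have HFj := congr1 (fun f => f j) HF; simpl in HFj.
  have -> : E j = U *m (adj U *m E j *m U) *m adj U.
    by rewrite !mulmxA HU2 mul1mx -mulmxA HU2 mulmx1.
  rewrite HFj /mcomb mulmx_sumr mulmx_suml; apply: eq_bigr => i' _.
  by rewrite adjM adjK !mulmxA.
have V'0 : forall i, V i *m adj U != 0.
  move=> i'; apply/eqP => H; move/eqP: (V0 i'); apply.
  by rewrite -[V i']mulmx1 -HU1 mulmxA H mul0mx.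
have iso' : isometric_family (fun i => V i *m adj U).
  rewrite /isometric_family.
  have -> : \sum_(i0 < k) adj (V i0 *m adj U) *m (V i0 *m adj U) =
            \sum_(i0 < k) U *m (adj (V i0) *m V i0) *m adj U.
    by apply: eq_bigr => i0 _; rewrite adjM adjK !mulmxA.
  by rewrite -mulmx_suml -mulmx_sumr HV mulmx1 HU2.
have HUE : unieq E (fun j => adj U *m E j *m U).
  exists U; split => //; split => // j.
  by rewrite !mulmxA HU2 mul1mx -mulmxA HU2 mulmx1.
case: (HE k mm Xs _ mpos HXs V'0 iso' HE' i) => [H | [p [Z [p0 [KZ H]]]]].
  by left; apply: unieq_trans H HUE.
right; exists p, Z; do 2 split => //.
by apply: unieq_trans H (unieq_dsum Z HUE).
Qed.

Lemma sum_enum k n (S : {set 'I_k}) (F : 'I_k -> 'M[C]_n) :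
  (forall i, i \notin S -> F i = 0) ->
  \sum_(i < #|S|) F (enum_val i) = \sum_i F i.
Proof.
move=> H; rewrite -big_enum_val /= [RHS](bigID (mem S)) /= [X in _ = _ + X]big1 ?addr0 //.
Qed.

Section Proj.
Variables (g h : nat) (Hgh : (g < h)%N).

Definition projX m (W : mtuple C h m) : mtuple C g m :=
  fun a => W (widen_ord (ltnW Hgh) a).
Lemma projY_lt (b : 'I_(h - g)) : (g + b < h)%N.
Proof. by rewrite -ltn_subRL. Qed.
Definition projY m (W : mtuple C h m) : mtuple C (h - g) m :=
  fun b => W (Ordinal (projY_lt b)).

Lemma pairT_proj m (W : mtuple C h m) : pairT (projX W) (projY W) = W.
Proof.
apply: functional_extensionality => j; rewrite /pairT.
case: insubP => [a _ Ea | Hj].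
  by rewrite /projX; congr W; apply: val_inj.
case: insubP => [b _ Eb | Hb].
  rewrite /projY; congr W; apply: val_inj => /=; rewrite Eb.
  move: Hj; rewrite -leqNgt => Hj; lia.
exfalso; move: Hj Hb; rewrite -leqNgt => Hj /negP; apply.
have := ltn_ord j; lia.
Qed.

Lemma projX_pairT m (X : mtuple C g m) (Y : mtuple C (h - g) m) :
  projX (pairT X Y) = X.
Proof.
apply: functional_extensionality => a; rewrite /projX /pairT.
case: insubP => [a' _ Ea | Ha]; first by congr X; apply: val_inj.
by rewrite /= ltn_ord in Ha.
Qed.
End Proj.

End Gen.

Theorem mainTheorem14 (R : realType) (h g : nat) (K : gset R[i] h)
  (HK : matrix_convex K)
  (Hhull : forall n (W : mtuple R[i] h n), (0 < n)%N ->
             (K n W <-> mconv (free_ext_set K) n W))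
  (Hgh : (g < h)%N) (n : nat) (X : mtuple R[i] g n)
  (HX : free_extreme (proj g K) X) :
  (exists Y : mtuple R[i] (h - g) n, free_extreme K (pairT X Y)) \/
  (exists (p : nat) (Z : mtuple R[i] g p) (Y : mtuple R[i] (h - g) (n + p)),
      (0 < p)%N /\ proj g K p Z /\ free_extreme K (pairT (dsum X Z) Y)).
Proof.
match goal with |- ?G => case: (classic G) => // nC end; exfalso.
have [n0 [[Y0 HY0] HXfree]] := HX.
pose K' : gset R[i] h := fun m W => K m W /\ ~ compr X (projX Hgh W).
have key : forall m (E : mtuple R[i] h m), free_extreme K E -> ~ compr X (projX Hgh E).
  move=> m E HE; have [m0 [KE _]] := HE; move=> [V [HV HXV]].
  have HPE : proj g K m (projX Hgh E) by exists (projY (g:=g) E); rewrite pairT_proj.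
  have V0 : V != 0.
    apply/eqP => V0; move: HV; rewrite V0 mulmx0 => /eqP; apply/negP.
    exact: zero_ne1.
  have iso : isometric_family (k:=1) (m:=fun _ => m) (fun _ => V).
    by rewrite /isometric_family big_ord1.
  have eqX : X = mcomb (k:=1) (m:=fun _ => m) (fun _ => projX Hgh E) (fun _ => V).
    by apply: functional_extensionality => a; rewrite /mcomb big_ord1 -HXV.
  case: (HXfree 1 (fun _ => m) (fun _ => projX Hgh E) (fun _ => V) (fun _ => m0)
          (fun _ => HPE) (fun _ => V0) iso eqX ord0)
    => [[W [HW1 [HW2 HWe]]] | [p [Z [p0 [HZ [W [HW1 [HW2 HWe]]]]]]]]; apply: nC.
    left; pose F := fun j => adj W *m E j *m W.
    exists (projY (g:=g) F).
    have PF : projX Hgh F = X.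
      apply: functional_extensionality => a; rewrite /projX /F.
      have := HWe a; rewrite /projX => ->.
      by rewrite !mulmxA HW1 mul1mx -mulmxA HW1 mulmx1.
    by rewrite -{1}PF pairT_proj; apply: conj_free.
  right; pose F := fun j => adj W *m E j *m W.
  exists p, Z, (projY (g:=g) F); split => //; split => //.
  have PF : projX Hgh F = dsum X Z.
    apply: functional_extensionality => a; rewrite /projX /F.
    have := HWe a; rewrite /projX => ->.
    by rewrite !mulmxA HW1 mul1mx -mulmxA HW1 mulmx1.
  rewrite -PF pairT_proj; apply: conj_free => //.
  by rewrite addn_gt0 n0.
have convK' : matrix_convex K'.
  split; first by move=> m W m0 [KW _]; exact: HK.1 m0 KW.
  move=> n' k m Ws V n'0 m0 HWs HV; split.
    by apply: HK.2 => // i; exact: (HWs i).1.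
  move=> [Vc [HVc HXc]].
  pose S := [set i | V i *m Vc != 0].
  pose m' := fun i : 'I_#|S| => m (enum_val i).
  pose Xs' := fun i : 'I_#|S| => projX Hgh (Ws (enum_val i)).
  pose V' := fun i : 'I_#|S| => V (enum_val i) *m Vc.
  have iso' : isometric_family (m:=m') V'.
    rewrite /isometric_family /V' /m'.
    rewrite (sum_enum (F := fun i => adj (V i *m Vc) *m (V i *m Vc))); last first.
      by move=> i; rewrite inE negbK => /eqP ->; rewrite adj0 mul0mx.
    have -> : \sum_i adj (V i *m Vc) *m (V i *m Vc) =
              \sum_i adj Vc *m (adj (V i) *m V i) *m Vc.
      by apply: eq_bigr => i _; rewrite adjM !mulmxA.
    by rewrite -mulmx_suml -mulmx_sumr HV mulmx1.
  have eqX' : X = mcomb (m:=m') Xs' V'.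
    apply: functional_extensionality => a; rewrite /mcomb /V' /Xs' /m'.
    rewrite (sum_enum (F := fun i => adj (V i *m Vc) *m projX Hgh (Ws i) a *m (V i *m Vc))); last first.
      by move=> i; rewrite inE negbK => /eqP ->; rewrite adj0 mul0mx mul0mx.
    have -> : \sum_i adj (V i *m Vc) *m projX Hgh (Ws i) a *m (V i *m Vc) =
              \sum_i adj Vc *m (adj (V i) *m Ws i (widen_ord (ltnW Hgh) a) *m V i) *m Vc.
      by apply: eq_bigr => i _; rewrite adjM !mulmxA.
    by rewrite -mulmx_suml -mulmx_sumr HXc.
  have V'0 : forall i, V' i != 0.
    by move=> i; have := enum_valP i; rewrite inE.
  have HXs' : forall i, proj g K (m' i) (Xs' i).
    by move=> i; exists (projY (g:=g) (Ws (enum_val i))); rewrite pairT_proj; exact: (HWs _).1.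
  case: (set_0Vmem S) => [S0 | [i1 Hi1]].
    have E1 : adj Vc *m Vc = \sum_i adj (V i *m Vc) *m (V i *m Vc).
      have -> : \sum_i adj (V i *m Vc) *m (V i *m Vc) =
                \sum_i adj Vc *m (adj (V i) *m V i) *m Vc.
        by apply: eq_bigr => i _; rewrite adjM !mulmxA.
      by rewrite -mulmx_suml -mulmx_sumr HV mulmx1.
    have E0 : \sum_i adj (V i *m Vc) *m (V i *m Vc) = 0.
      apply: big1 => i _.
      have : i \notin S by rewrite S0 inE.
      by rewrite inE negbK => /eqP ->; rewrite adj0 mul0mx.
    by move: HVc; rewrite E1 E0 => /eqP; apply/negP; exact: zero_ne1.
  pose i0 := enum_rank_in Hi1 i1.
  case: (HXfree #|S| m' Xs' V' (fun i => m0 _) HXs' V'0 iso' eqX' i0)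
    => [HU | [p [Z [_ [_ HU]]]]]; apply: (HWs (enum_val i0)).2.
    exact: compr_unieq HU.
  exact: compr_unieq_dsum HU.
have := (proj1 (Hhull n (pairT X Y0) n0) HY0) K' convK'.
case.
  by move=> p Y p0 HY; split; [exact: HY.2.1 | exact: key].
move=> _; apply; exists 1%:M; split; first by rewrite adj1 mul1mx.
by move=> a; rewrite adj1 mul1mx mulmx1 projX_pairT.
Qed.
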